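(* Let $q\neq-1$ and $r$ be real parameters, $n\ge 0$, $k\ge 0$. The $w_r$-weight $u(n,k,s,r)$ of the set of all tilings of an $n$-board with exactly $k$ dominoes is $$u(n,k,s,r)=q^{k^2}\begin{bmatrix} n-k\\ k\end{bmatrix}(1+q^{k+1}r)\cdots(1+q^{n-k}r)\,s^kx^{n-2k}$$ for $0\le k\le\lfloor n/2\rfloor$, and $u(n,k,s,r)=0$ for $k>\lfloor n/2\rfloor$.
   Context: An $n$-board is a $1\times n$ rectangle with cells numbered $1,\dots,n$, tiled by white squares, black squares (each covering one cell) and dominoes (covering two adjacent cells). The weight $w_r$: a white square has weight $x$; a black square at cell $i$ has weight $q^i r x$; a domino covering cells $i-1,i$ has weight $q^{i-1}s$. The weight of a tiling is the product of the weights of its tiles; the weight of a set of tilings is the sum of the weights. Notation: $[m]=1+q+\cdots+q^{m-1}$, $[m]!=[1][2]\cdots[m]$, and $\begin{bmatrix} m\\ j\end{bmatrix}=\frac{[m]!}{[j]![m-j]!}$ for $0\le j\le m$. Empty products equal $1$. *)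

(* Defs.v *)
From HB Require Import structures.
From mathcomp Require Import all_boot all_order all_algebra.
Set Implicit Arguments. Unset Strict Implicit. Unset Printing Implicit Defensive.
Import Order.TTheory GRing.Theory Num.Theory.
Local Open Scope ring_scope.

Inductive tile := White | Black | Domino.

Definition tile_to_ord (t : tile) : 'I_3 :=
  match t with White => inord 0 | Black => inord 1 | Domino => inord 2 end.
Definition ord_to_tile (i : 'I_3) : tile :=
  match val i with 0%N => White | 1%N => Black | _ => Domino end.
Lemma tile_to_ordK : cancel tile_to_ord ord_to_tile.
Proof. by case; rewrite /ord_to_tile /= inordK. Qed.
HB.instance Definition _ := Finite.copy tile (can_type tile_to_ordK).

Definition tile_len (t : tile) : nat := if t is Domino then 2 else 1.

Definition tiles_len (s : seq tile) : nat := (\sum_(t <- s) tile_len t)%N.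

Definition is_tiling (n : nat) (s : seq tile) : bool := tiles_len s == n.

Definition ndom (s : seq tile) : nat := count (pred1 Domino) s.

(* w_r-weight of the tiles s, when the cells 1..c are already covered
   (so the first tile of s starts at cell c+1):
   white: x; black at cell i: q^i r x; domino on cells i-1,i: q^(i-1) s. *)
Fixpoint wr {R : ringType} (q r sd x : R) (c : nat) (s : seq tile) : R :=
  match s with
  | [::] => 1
  | White :: s' => x * wr q r sd x c.+1 s'
  | Black :: s' => (q ^+ c.+1 * r * x) * wr q r sd x c.+1 s'
  | Domino :: s' => (q ^+ c.+1 * sd) * wr q r sd x c.+2 s'
  end.

(* u(n,k,s,r): weight of the set of all tilings of the n-board with exactly
   k dominoes.  A tiling of the n-board uses at most n tiles, so we sum over
   all tile sequences of length m <= n. *)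
Definition u {R : ringType} (q r sd x : R) (n k : nat) : R :=
  \sum_(m < n.+1) \sum_(t : m.-tuple tile | is_tiling n t && (ndom t == k))
     wr q r sd x 0 t.

Definition qint {R : ringType} (q : R) (m : nat) : R := \sum_(i < m) q ^+ i.
Definition qfact {R : ringType} (q : R) (m : nat) : R :=
  \prod_(i < m) qint q i.+1.
Definition qbinom {R : fieldType} (q : R) (m j : nat) : R :=
  qfact q m / (qfact q j * qfact q (m - j)).

(* Main.v *)
From HB Require Import structures.
From mathcomp Require Import all_boot all_order all_algebra.
From mathcomp Require Import ring lra zify.
Require Import Defs.
Import Order.TTheory GRing.Theory Num.Theory.
Local Open Scope ring_scope.

Section Comb.
Variable R : realFieldType.
Implicit Types (F : seq tile -> R).

Definition T n F : R := \sum_(m < n.+1) \sum_(t : m.-tuple tile | is_tiling n t) F t.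

Lemma tiles_len_cons a t : tiles_len (a :: t) = (tile_len a + tiles_len t)%N.
Proof. by rewrite /tiles_len big_cons. Qed.

Lemma tiles_len_ge t : (size t <= tiles_len t)%N.
Proof. elim: t => [|a t IH] //=; rewrite tiles_len_cons; case: a => /=; lia. Qed.

Lemma tile_eqE (a b : tile) : (a == b) = (tile_to_ord a == tile_to_ord b).
Proof. by []. Qed.
Lemma enum_tile : perm_eq (enum {: tile}) [:: White; Black; Domino].
Proof. apply: uniq_perm; first exact: enum_uniq.
  rewrite /= !inE !tile_eqE /= -!val_eqE /= !inordK //.
 case; rewrite mem_enum !inE !tile_eqE ?eqxx ?orbT //. Qed.

Lemma sum_tile (G : tile -> R) : \sum_(a : tile) G a = G White + G Black + G Domino.
Proof. rewrite -big_enum (perm_big _ enum_tile) !big_cons big_nil /=; ring. Qed.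

Lemma sum_tuple_cons m (P : pred (seq tile)) (G : seq tile -> R) :
 \sum_(t : m.+1.-tuple tile | P t) G t =
 \sum_(a : tile) \sum_(t : m.-tuple tile | P (a :: t)) G (a :: t).
Proof.
rewrite (reindex (fun p : tile * m.-tuple tile => [tuple of p.1 :: p.2])) /=.
  by rewrite pair_big_dep /=.
exists (fun t : m.+1.-tuple tile => (thead t, [tuple of behead t])).
  by move=> [a t] _ /=; rewrite theadE; congr pair; apply: val_inj.
by move=> t _; rewrite /= -tuple_eta.
Qed.

Lemma sum_tuple0 (P : pred (seq tile)) (G : seq tile -> R) :
 \sum_(t : 0.-tuple tile | P t) G t = if P [::] then G [::] else 0.
Proof.
rewrite big_mkcond (eq_bigr (fun _ => if P [::] then G [::] else 0)).
  by rewrite sumr_const card_tuple expn0.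
by move=> t _; rewrite (tuple0 t).
Qed.

Lemma T0 F : T 0 F = F [::].
Proof.
rewrite /T big_ord1 /= (@sum_tuple0 (is_tiling 0) F) /is_tiling /tiles_len big_nil.
by [].
Qed.

Lemma T_cons n F : T n.+1 F =
  T n (fun t => F (White :: t)) + T n (fun t => F (Black :: t)) +
  (if n is n'.+1 then T n' (fun t => F (Domino :: t)) else 0).
Proof.
rewrite /T big_ord_recl /= (@sum_tuple0 (is_tiling n.+1) F).
have -> : is_tiling n.+1 [::] = false by rewrite /is_tiling /tiles_len big_nil.
rewrite add0r.
under eq_bigr => i _ do rewrite (@sum_tuple_cons i (is_tiling n.+1) F) sum_tile.
rewrite !big_split /=.
congr (_ + _ + _).
- by apply: eq_bigr => i _; apply: eq_bigl => t; rewrite /is_tiling tiles_len_cons.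
- by apply: eq_bigr => i _; apply: eq_bigl => t; rewrite /is_tiling tiles_len_cons.
case: n => [|n].
  by apply: big1 => i _; apply: big_pred0 => t; rewrite /is_tiling tiles_len_cons.
rewrite big_ord_recr /= [X in _ + X]big_pred0 ?addr0.
  by apply: eq_bigr => i _; apply: eq_bigl => t; rewrite /is_tiling tiles_len_cons.
move=> t; rewrite /is_tiling tiles_len_cons /=.
have := tiles_len_ge t; rewrite size_tuple; lia.
Qed.

Lemma T_ext n F G : (forall t, F t = G t) -> T n F = T n G.
Proof. by move=> e; apply: eq_bigr => m _; apply: eq_bigr => t _. Qed.

Lemma T_scale n c F : T n (fun t => c * F t) = c * T n F.
Proof. rewrite /T mulr_sumr; apply: eq_bigr => m _; by rewrite mulr_sumr. Qed.

Lemma T_zero n : T n (fun _ => 0) = 0.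
Proof. by apply: big1 => m _; apply: big1. Qed.

Lemma wr_shift (q r s x : R) c t : wr q r s x c.+1 t = wr q (q*r) (q*s) x c t.
Proof.
elim: t c r s => [|a t IH] c r s //=.
case: a => /=; rewrite IH //; congr (_ * _); rewrite !exprS; ring.
Qed.

Lemma u_T (q r s x : R) n k :
  u q r s x n k = T n (fun t => if ndom t == k then wr q r s x 0 t else 0).
Proof. by apply: eq_bigr => m _; rewrite big_mkcondr. Qed.

Lemma u_0 (q r s x : R) k : u q r s x 0 k = if k == 0%N then 1 else 0.
Proof. by rewrite u_T T0 /ndom /= eq_sym. Qed.

Lemma eqWD : (White == Domino) = false.
Proof. by rewrite tile_eqE /= -val_eqE /= !inordK. Qed.
Lemma eqBD : (Black == Domino) = false.
Proof. by rewrite tile_eqE /= -val_eqE /= !inordK. Qed.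

Lemma u_succ (q r s x : R) n k :
  u q r s x n.+1 k = x * (1 + q * r) * u q (q*r) (q*s) x n k +
   (if n is n'.+1 then (if k is k'.+1 then q * s * u q (q*(q*r)) (q*(q*s)) x n' k' else 0) else 0).
Proof.
rewrite [LHS]u_T T_cons [u q (q*r) _ _ _ _]u_T.
rewrite (@T_ext n _ (fun t => x * (if ndom t == k then wr q (q*r) (q*s) x 0 t else 0))); last first.
  by move=> t; rewrite /ndom /= eqWD add0n; case: ifP => _; rewrite ?mulr0 // wr_shift.
rewrite (@T_ext n (fun t => if ndom (Black :: t) == k then wr q r s x 0 (Black :: t) else 0) (fun t => q * r * x * (if ndom t == k then wr q (q*r) (q*s) x 0 t else 0))); last first.
  by move=> t; rewrite /ndom /= eqBD add0n; case: ifP => _; rewrite ?mulr0 // wr_shift expr1.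
rewrite !T_scale -mulrDl mulrDr mulr1 [q * r * x]mulrC mulrA.
congr (_ + _).
case: n => [|n] //.
case: k => [|k].
  by rewrite (@T_ext n _ (fun _ => 0)) ?T_zero // => t; rewrite /ndom /= eqxx.
rewrite u_T -T_scale; apply: T_ext => t.
by rewrite /ndom /= eqxx add1n eqSS; case: ifP => _; rewrite ?mulr0 // !wr_shift expr1 !mulrA.
Qed.
End Comb.
Section Alg.
Variable R : realFieldType.
Variable q : R.
Hypothesis hq : q != -1.

Lemma qint_add m n : qint q (m + n) = qint q m + q ^+ m * qint q n.
Proof.
rewrite /qint big_split_ord /= mulr_sumr; congr (_ + _).
by apply: eq_bigr => i _; rewrite exprD.
Qed.

Lemma qint_neq0 m : (0 < m)%N -> qint q m != 0.
Proof.
case: m => // m _; apply/negP => /eqP h0.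
have h1 : q ^+ m.+1 == 1 by rewrite expfS_eq1 -/(qint q m.+1) h0 eqxx orbT.
have : `|q| == 1 by rewrite -(pexpr_eq1 (ltn0Sn m)) // -normrX (eqP h1) normr1.
rewrite -sqr_norm_eq1 sqrf_eq1 (negbTE hq) orbF => /eqP q1.
move: h0; rewrite /qint q1 (eq_bigr (fun _ => 1)) ?sumr_const ?card_ord => [/eqP|i _].
  by rewrite pnatr_eq0.
by rewrite expr1n.
Qed.

Lemma qfact_S m : qfact q m.+1 = qfact q m * qint q m.+1.
Proof. by rewrite /qfact big_ord_recr. Qed.

Lemma qfact_neq0 m : qfact q m != 0.
Proof.
elim: m => [|m IH]; first by rewrite /qfact big_ord0 oner_neq0.
by rewrite qfact_S mulf_neq0 // qint_neq0.
Qed.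

Definition G j k := qbinom q (j + k) k.

Lemma GE j k : G j k = qfact q (j + k) / (qfact q k * qfact q j).
Proof. by rewrite /G /qbinom addnK. Qed.

Lemma qfact0 : qfact q 0 = 1.
Proof. by rewrite /qfact big_ord0. Qed.

Lemma G0l k : G 0 k = 1.
Proof. by rewrite GE add0n qfact0 mulr1 divff // qfact_neq0. Qed.

Lemma G0r j : G j 0 = 1.
Proof. by rewrite GE addn0 qfact0 mul1r divff // qfact_neq0. Qed.

Lemma Gpas j k : G j.+1 k.+1 = G j k.+1 + q ^+ j.+1 * G j.+1 k /\
                 G j.+1 k.+1 = q ^+ k.+1 * G j k.+1 + G j.+1 k.
Proof.
rewrite !GE !addnS !addSn (qfact_S (j+k).+1) (qfact_S k) (qfact_S j).
have e : qint q (j + k).+2 = qint q j.+1 + q ^+ j.+1 * qint q k.+1.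
  by rewrite -qint_add addSn addnS.
have e' : qint q (j + k).+2 = q ^+ k.+1 * qint q j.+1 + qint q k.+1.
  by rewrite addrC -qint_add addSn addnS addnC.
have hF := qfact_neq0 (j + k).+1.
have ha := qfact_neq0 k. have hb := qfact_neq0 j.
have hk := qint_neq0 _ (ltn0Sn k). have hj := qint_neq0 _ (ltn0Sn j).
split.
- by rewrite e; field; rewrite hj hb ha hk.
- by rewrite e'; field; rewrite hj hb ha hk.
Qed.
End Alg.
Arguments G {R}.
Arguments G0l {R q}.
Arguments G0r {R q}.
Arguments Gpas {R q}.


Section Main.
Variable R : realFieldType.
Variables (q x : R).
Hypothesis hq : q != -1.

Definition Pp (r : R) a j := \prod_(i < j) (1 + q ^+ (a + i) * r).

Lemma Pp0 r a : Pp r a 0 = 1.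
Proof. by rewrite /Pp big_ord0. Qed.

Lemma Pp_shift r a j : Pp (q * r) a j = Pp r a.+1 j.
Proof. apply: eq_bigr => i _; by rewrite addSn exprS !mulrA [q ^+ _ * q]mulrC. Qed.

Lemma Pp_recl r a j : Pp r a j.+1 = (1 + q ^+ a * r) * Pp r a.+1 j.
Proof. by rewrite /Pp big_ord_recl addn0; congr (_ * _); apply: eq_bigr => i _; rewrite /= addSn addnS. Qed.

Lemma Pp_recr r a j : Pp r a j.+1 = Pp r a j * (1 + q ^+ (a + j) * r).
Proof. by rewrite /Pp big_ord_recr. Qed.

Lemma sqexp k : q ^+ (k.+1 * k.+1) = q * q ^+ k * q ^+ k * q ^+ (k * k).
Proof.
rewrite (_ : (k.+1 * k.+1 = (k * k + k + k).+1)%N); last by lia.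
rewrite exprS !exprD; move: (q ^+ k) (q ^+ (k * k)) => a b; ring.
Qed.

Lemma main n : forall r s k, u q r s x n k =
  if (2 * k <= n)%N then q ^+ (k * k) * G q (n - 2 * k) k * Pp r k.+1 (n - 2 * k)
     * s ^+ k * x ^+ (n - 2 * k) else 0.
Proof.
elim/ltn_ind: n => -[|[|n]] IH r s k.
- rewrite u_0; case: k => [|k] /=.
    by rewrite !muln0 !subn0 (G0l hq) Pp0 !expr0 !mulr1.
  by [].
- rewrite u_succ u_0 /= addr0; case: k => [|k] /=.
    by rewrite !muln0 !subn0 (G0r hq) Pp_recl Pp0 !expr0 !expr1 !mulr1 mul1r mulrC.
  have -> : (2 * k.+1 <= 1)%N = false by lia.
  by rewrite mulr0.
rewrite u_succ (IH n.+1) //.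
case: k => [|k].
  rewrite /= !muln0 !subn0 !(G0r hq) Pp_shift (Pp_recl r 1) !expr0 !mulr1 !mul1r (exprS x n.+1).
  rewrite expr1; move: (Pp r 2 n.+1) (x ^+ n.+1) => P X; ring.
rewrite (IH n) //.
have [h|h] := leqP (2 * k.+1) n.+1.
  have [j ej] : exists j, n.+1 = (2 * k.+1 + j)%N by exists (n.+1 - 2 * k.+1)%N; lia.
  have h2 : (2 * k.+1 <= n.+2)%N by lia.
  have h3 : (2 * k <= n)%N by lia.
  have e1 : (n.+1 - 2 * k.+1 = j)%N by lia.
  have e2 : (n.+2 - 2 * k.+1 = j.+1)%N by lia.
  have e3 : (n - 2 * k = j.+1)%N by lia.
  rewrite h2 h3 e1 e2 e3 !Pp_shift (Pp_recr r k.+3) (Pp_recl r k.+2).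
  have [E1 E2] := Gpas hq j k.
  rewrite exprS in E1; rewrite exprS in E2.
  rewrite !sqexp !exprMn ?exprS ?exprD ?exprS E1.
  move: E2; rewrite E1 => E2.
  move: E2; move: (G q j.+1 k) (G q j k.+1) (q ^+ k) (q ^+ j) (q ^+ (k * k)) (s ^+ k) (x ^+ j) (Pp r k.+3 j) => C B Q J K S X P E2.
  apply/eqP; rewrite -subr_eq0; apply/eqP.
  transitivity (-(q*Q*Q*K*P*s*S*x*X) * (B + q*J*C - (q*Q*B + C))); first ring.
  by rewrite E2 subrr mulr0.
rewrite mulr0 add0r.
have [e|ne] := eqVneq n (2 * k)%N.
  rewrite e leqnn subnn (_ : (2 * k.+1 <= (2 * k).+2)%N = true); last by lia.
  rewrite (_ : ((2 * k).+2 - 2 * k.+1 = 0)%N); last by lia.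
  rewrite !(G0l hq) !Pp0 !expr0 sqexp !exprMn exprS.
  move: (q ^+ k) (s ^+ k) (q ^+ (k * k)) => Q S K; ring.
rewrite (_ : (2 * k <= n)%N = false); last by lia.
rewrite (_ : (2 * k.+1 <= n.+2)%N = false); last by lia.
by rewrite mulr0.
Qed.

Lemma Pp_nat r a j : Pp r a j = \prod_(a <= i < a + j) (1 + q ^+ i * r).
Proof.
elim: j => [|j IH]; first by rewrite Pp0 addn0 big_geq.
by rewrite Pp_recr IH addnS big_nat_recr //= leq_addr.
Qed.
End Main.

Theorem theorem2p2 (R : realFieldType) (q r s x : R) (hq : q != -1)
    (n k : nat) :
  u q r s x n k =
  if (k <= n./2)%N then
    q ^+ (k ^ 2) * qbinom q (n - k) k
      * (\prod_(k.+1 <= i < (n - k).+1) (1 + q ^+ i * r))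
      * s ^+ k * x ^+ (n - 2 * k)
  else 0.
Proof.
rewrite (@main R q x hq) geq_half_double -mul2n.
case: ifP => // h.
rewrite -mulnn Pp_nat /G (_ : (n - 2 * k + k = n - k)%N); last by lia.
by rewrite (_ : (k.+1 + (n - 2 * k) = (n - k).+1)%N); last by lia.
Qed.
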